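(* For a connected scalar Feynman graph $G$ with $n+1$ vertices ($n\ge1$) and $I$ internal lines, the function $D_R(p,E,T)$ produced by the OFPT-rules satisfies $$D_R(p,E,T)=\hat O(E,T)\,D_0(p,E),\qquad \hat O(E,T)=\sum_{J}\ \prod_{j\in J}n(E_j)\,(1+\mathcal{S}_j),$$ where the sum runs over all subsets $J\subseteq\{1,\dots,I\}$ (including $J=\emptyset$, contributing the identity) such that the graph obtained from $G$ by deleting all internal lines in $J$ is still connected (such $J$ have at most $L=I-n$ elements).
   Context: Setting: $T>0$, $n(E)=(e^{E/T}-1)^{-1}$. Each external line $l$ of $G$ carries a real Euclidean 4-vector $(p_l,\mathbf p_l)$ and is assigned energy $ip_l$; each internal line $i$ carries 3-momentum $\mathbf k_i$ and is assigned energy $E_i=(\mathbf k_i^2+m_i^2)^{1/2}$. OFPT-rules: (b) fix a time direction and consider all $(n+1)!$ orderings of the vertices along it. (c) For each time-ordered graph consider, besides itself, all connected graphs obtained by snipping any set of internal lines; a snipped line $i$ becomes a pair of ''thermal legs'' attached at its two endpoint vertices, both carrying energy $E_i$, one oriented incoming and the other outgoing; both orientations are considered, each giving a different diagram. (d) For such a diagram, a thermal pair is called external if its incoming leg joins the diagram (in the time ordering) before its outgoing partner, and internal otherwise. Let $E_{inc}$ be the sum of all incoming external energies plus the energies of the incoming legs of all external thermal pairs. The diagram's value is the product of: for each of the $n$ vertical cuts between consecutive time-ordered vertices, a factor $1/(E_{inc}-E_{cut})$, where $E_{cut}$ is the sum of the energies of all lines crossing the cut (as in zero-temperature time-ordered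 perturbation theory) plus the energies of all internal thermal pairs whose originating internal line would have crossed the cut; a factor $n(E_i)$ for each thermal pair; and an overall factor $(-1)^n$. (e) $D_R(p,E,T)$ is the sum of these values over all diagrams in (c). $D_0(p,E):=D_R(p,E,0)$, i.e. the sum over the unsnipped time-ordered diagrams with the weights of rule (d) (the zero-temperature Euclidean $D$-function computed by old-fashioned perturbation theory), regarded as a function of independent variables $E_1,\dots,E_I$. $\mathcal{S}_j$ is the reflection $E_j\mapsto -E_j$ acting on $D_0$; the factors $n(E_j)$ are multiplicative constants. *)

(* Defs.v *)
From HB Require Import structures.
From mathcomp Require Import all_boot all_order all_algebra all_fingroup.
From mathcomp Require Import boolp reals.
From mathcomp.analysis Require Import sequences exp.
From mathcomp.real_closed Require Import complex.

Set Implicit Arguments.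
Unset Strict Implicit.
Unset Printing Implicit Defensive.

Import Order.TTheory GRing.Theory Num.Theory.
Local Open Scope ring_scope.

(* Internal line i joins vertices [src i] and [tgt i] (the
   orientation is irrelevant).  External line l ('I_Ne) is attached at vertex
   [att l]; it is incoming if [inc l] (drawn from the far past/left), outgoing
   otherwise (drawn to the far future/right).  Its energy is i*p_l.           *)

Section OFPT.
Variables (R : realType) (n I Ne : nat).
Variables (src tgt : 'I_I -> 'I_n.+1) (att : 'I_Ne -> 'I_n.+1)
          (inc : 'I_Ne -> bool).

Definition adj (J : {set 'I_I}) : rel 'I_n.+1 := fun u v =>
  [exists i : 'I_I, (i \notin J) &&
     (((src i == u) && (tgt i == v)) || ((src i == v) && (tgt i == u)))].

Definition connected_after (J : {set 'I_I}) : Prop :=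
  forall u v : 'I_n.+1, connect (adj J) u v.

Definition nBE (T E : R) : R := (expR (E / T) - 1)^-1.

(* A time ordering is a bijection [pos] vertex -> time position.  Cut k
   (k < n) separates positions <= k from positions > k. *)
Definition before (pos : {perm 'I_n.+1}) (v : 'I_n.+1) (k : 'I_n) : bool :=
  (pos v <= k)%N.

Definition crosses (pos : {perm 'I_n.+1}) (u v : 'I_n.+1) (k : 'I_n) : bool :=
  before pos u k != before pos v k.

(* A diagram of rule (c): time ordering [pos], set [J] of snipped lines, and
   orientation [O \subset J]: for j in O the incoming thermal leg sits at
   [src j] (outgoing at [tgt j]); for j in J :\: O the reverse. *)
Definition in_vtx (O : {set 'I_I}) (j : 'I_I) := if j \in O then src j else tgt j.
Definition out_vtx (O : {set 'I_I}) (j : 'I_I) := if j \in O then tgt j else src j.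

Definition ext_pair (pos : {perm 'I_n.+1}) (O : {set 'I_I}) (j : 'I_I) : bool :=
  (pos (in_vtx O j) < pos (out_vtx O j))%N.

Variables (p : 'I_Ne -> R) (E : 'I_I -> R).

Local Notation C := (R[i]).
Local Notation "x %:C" := (real_complex R x).

Definition E_inc (pos : {perm 'I_n.+1}) (J O : {set 'I_I}) : C :=
  \sum_(l < Ne | inc l) 'i%C * (p l)%:C
  + \sum_(j in J | ext_pair pos O j) (E j)%:C.

(* E_cut at cut k: lines crossing the cut (unsnipped internal lines; external
   lines; the legs of external thermal pairs, which behave as external lines)
   plus internal thermal pairs whose originating line would cross the cut. *)
Definition E_cut (pos : {perm 'I_n.+1}) (J O : {set 'I_I}) (k : 'I_n) : C :=
  \sum_(j < I | (j \notin J) && crosses pos (src j) (tgt j) k) (E j)%:C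
  + \sum_(l < Ne | if inc l then ~~ before pos (att l) k else before pos (att l) k)
        'i%C * (p l)%:C
  + \sum_(j in J | ext_pair pos O j && ~~ before pos (in_vtx O j) k) (E j)%:C
  + \sum_(j in J | ext_pair pos O j && before pos (out_vtx O j) k) (E j)%:C
  + \sum_(j in J | ~~ ext_pair pos O j && crosses pos (src j) (tgt j) k) (E j)%:C.

Definition denoms (pos : {perm 'I_n.+1}) (J O : {set 'I_I}) : C :=
  (-1) ^+ n * \prod_(k < n) (E_inc pos J O - E_cut pos J O k)^-1.

Definition diagram_value (T : R) (pos : {perm 'I_n.+1}) (J O : {set 'I_I}) : C :=
  denoms pos J O * (\prod_(j in J) nBE T (E j))%:C.

Definition D_R (T : R) : C :=
  \sum_(pos : {perm 'I_n.+1})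
    \sum_(J : {set 'I_I} | `[< connected_after J >])
      \sum_(O : {set 'I_I} | O \subset J) diagram_value T pos J O.

End OFPT.

Definition D_0 (R : realType) (n I Ne : nat) (src tgt : 'I_I -> 'I_n.+1)
  (att : 'I_Ne -> 'I_n.+1) (inc : 'I_Ne -> bool) (p : 'I_Ne -> R)
  (E : 'I_I -> R) : R[i] :=
  \sum_(pos : {perm 'I_n.+1}) denoms src tgt att inc p E pos set0 set0.

Definition reflect_E (R : realType) (I : nat) (j : 'I_I) (E : 'I_I -> R) : 'I_I -> R :=
  fun i => if i == j then - E i else E i.

Definition S_op (R : realType) (I : nat) (j : 'I_I) (F : ('I_I -> R) -> R[i]) :
  ('I_I -> R) -> R[i] := fun E => F (reflect_E j E).

Definition onePlusS (R : realType) (I : nat) (j : 'I_I) (F : ('I_I -> R) -> R[i]) :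
  ('I_I -> R) -> R[i] := fun E => F E + S_op j F E.

(* (prod_{j in J} (1+S_j)) F, the S_j commuting *)
Definition prod_onePlusS (R : realType) (I : nat) (J : {set 'I_I})
  (F : ('I_I -> R) -> R[i]) : ('I_I -> R) -> R[i] :=
  foldr (@onePlusS R I) F (enum J).

(* (O^(E,T) F)(E) = sum_J prod_{j in J} n(E_j) (1+S_j) F, evaluated at E,
   the n(E_j) being multiplicative constants. *)
Definition O_hat_apply (R : realType) (n I : nat) (src tgt : 'I_I -> 'I_n.+1)
  (T : R) (E : 'I_I -> R) (F : ('I_I -> R) -> R[i]) : R[i] :=
  \sum_(J : {set 'I_I} | `[< connected_after src tgt J >])
    real_complex R (\prod_(j in J) nBE T (E j)) * prod_onePlusS J F E.

Definition onshell (R : realType) (k : 'rV[R]_3) (m : R) : R :=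
  Num.sqrt (\sum_(a < 3) k 0 a ^+ 2 + m ^+ 2).

(* Main.v *)
Require Import Defs.
From HB Require Import structures.
From mathcomp Require Import all_boot all_order all_algebra all_fingroup.
From mathcomp Require Import boolp reals.
From mathcomp.analysis Require Import sequences exp.
From mathcomp.real_closed Require Import complex.
From mathcomp Require Import ring.
Import Order.TTheory GRing.Theory Num.Theory.
Local Open Scope ring_scope.
Local Open Scope complex_scope.
Set Implicit Arguments.
Unset Strict Implicit.

Section Key.
Variables (R : realType) (n I Ne : nat).
Variables (src tgt : 'I_I -> 'I_n.+1) (att : 'I_Ne -> 'I_n.+1)
          (inc : 'I_Ne -> bool) (p : 'I_Ne -> R).

Definition flip (S : {set 'I_I}) (E : 'I_I -> R) : 'I_I -> R :=
  fun i => if i \in S then - E i else E i.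

Definition hterm (E : 'I_I -> R) pos (J O : {set 'I_I}) k (j : 'I_I) : R[i] :=
  (if (j \in J) && ext_pair src tgt pos O j then (E j)%:C else 0)
  - (if (j \notin J) && crosses pos (src j) (tgt j) k then (E j)%:C else 0)
  - (if (j \in J) && (ext_pair src tgt pos O j && ~~ before pos (in_vtx src tgt O j) k) then (E j)%:C else 0)
  - (if (j \in J) && (ext_pair src tgt pos O j && before pos (out_vtx src tgt O j) k) then (E j)%:C else 0)
  - (if (j \in J) && (~~ ext_pair src tgt pos O j && crosses pos (src j) (tgt j) k) then (E j)%:C else 0).

Lemma diff_sum E pos J O k :
  E_inc src tgt inc p E pos J O - E_cut src tgt att inc p E pos J O k =
  \sum_(l < Ne | inc l) 'i%C * (p l)%:C
  - \sum_(l < Ne | if inc l then ~~ before pos (att l) k else before pos (att l) k)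
        'i%C * (p l)%:C
  + \sum_j hterm E pos J O k j.
Proof.
rewrite /E_inc /E_cut /hterm !sumrB.
rewrite [\sum_(j in J | _) _]big_mkcond [\sum_(j < I | _ && _) _]big_mkcond.
rewrite [\sum_(j in J | ext_pair _ _ _ _ _ && ~~ _) _]big_mkcond.
rewrite [\sum_(j in J | ext_pair _ _ _ _ _ && before _ _ _) _]big_mkcond.
rewrite [\sum_(j in J | ~~ ext_pair _ _ _ _ _ && _) _]big_mkcond /=.
ring.
Qed.
End Key.
From mathcomp Require Import zify.
Section Key2.
Variables (R : realType) (n I Ne : nat).
Variables (src tgt : 'I_I -> 'I_n.+1) (att : 'I_Ne -> 'I_n.+1)
          (inc : 'I_Ne -> bool) (p : 'I_Ne -> R).

Lemma hterm_flip (E : 'I_I -> R) (pos : {perm 'I_n.+1}) J O k j : src j != tgt j ->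
  hterm src tgt E pos J O k j =
  hterm src tgt (flip [set j in J | ext_pair src tgt pos O j] E) pos set0 set0 k j.
Proof.
move=> Hst.
have Hne : (nat_of_ord (pos (src j)) != pos (tgt j)).
  apply/negP => /eqP /val_inj /perm_inj /eqP; by apply/negP.
rewrite /hterm /flip /ext_pair /in_vtx /out_vtx /crosses /before !inE.
move: Hne.
case: (j \in J); case: (j \in O) => /=;
set a := nat_of_ord (pos (src j)); set b := nat_of_ord (pos (tgt j));
case Hak: (a <= k)%N; case Hbk: (b<=k)%N; case Hab: (a<b)%N; case Hba: (b<a)%N => Hne /=;
  rewrite ?rmorphN; (try ring); lia.
Qed.
End Key2.
Section Key3.
Variables (R : realType) (n I Ne : nat).
Variables (src tgt : 'I_I -> 'I_n.+1) (att : 'I_Ne -> 'I_n.+1)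
          (inc : 'I_Ne -> bool) (p : 'I_Ne -> R).
Hypothesis Hst : forall i, src i != tgt i.

Lemma denoms_flip (E : 'I_I -> R) pos (J O : {set 'I_I}) :
 denoms src tgt att inc p E pos J O =
 denoms src tgt att inc p (flip [set j in J | ext_pair src tgt pos O j] E) pos set0 set0.
Proof.
rewrite /denoms; congr (_ * _); apply: eq_bigr => k _; rewrite !diff_sum.
congr (_ ^-1); congr (_ + _); apply: eq_bigr => j _; exact: hterm_flip.
Qed.

Definition hinv (J D O : {set 'I_I}) : {set 'I_I} :=
  [set j | if j \in J then (j \in O) == (j \in D) else j \in O].

Lemma hinvK J D : involutive (hinv J D).
Proof.
move=> O; apply/setP => j; rewrite !inE; case: (j \in J) => //.
by case: (j \in O); case: (j \in D).
Qed.

Lemma hinv_sub J D O : (hinv J D O \subset J) = (O \subset J).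
Proof.
apply/idP/idP => /subsetP H; apply/subsetP => x; have := H x; rewrite !inE;
  case: (x \in J) => //.
Qed.

Lemma ext_set (pos : {perm 'I_n.+1}) (J O : {set 'I_I}) : O \subset J ->
  [set j in J | ext_pair src tgt pos O j] =
  hinv J [set j | (pos (src j) < pos (tgt j))%N] O.
Proof.
move=> /subsetP HO; apply/setP => j; rewrite !inE /ext_pair /in_vtx /out_vtx.
have Hne : (nat_of_ord (pos (src j)) != pos (tgt j)).
  apply/negP => /eqP /val_inj /perm_inj /eqP; by apply/negP.
case HJ: (j \in J) => /=.
  case: (j \in O) => /=; first by case: ltnP.
  move: Hne; case: ltngtP => //.
by case HjO: (j \in O) => //; move: (HO _ HjO); rewrite HJ.
Qed.

Lemma sum_O (E : 'I_I -> R) pos (J : {set 'I_I}) :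
  \sum_(O : {set 'I_I} | O \subset J) denoms src tgt att inc p E pos J O =
  \sum_(S : {set 'I_I} | S \subset J) denoms src tgt att inc p (flip S E) pos set0 set0.
Proof.
rewrite [RHS](reindex_inj (can_inj (hinvK J [set j | (pos (src j) < pos (tgt j))%N]))).
apply: eq_big => O; first by rewrite hinv_sub.
move=> HO; rewrite denoms_flip ext_set //.
Qed.
End Key3.

Lemma flip0 (R : realType) I (E : 'I_I -> R) : flip set0 E = E.
Proof. by apply/funext => i; rewrite /flip inE. Qed.

Lemma foldr_onePlusS (R : realType) I (F : ('I_I -> R) -> R[i]) s : uniq s ->
  forall E, foldr (@onePlusS R I) F s E =
    \sum_(S : {set 'I_I} | S \subset [set x in s]) F (flip S E).
Proof.
elim: s => [|x s IH] /=.
  move=> _ E.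
  have -> : [set x in [::]] = set0 :> {set 'I_I} by apply/setP => x; rewrite !inE.
  under eq_bigl => S do rewrite subset0.
  by rewrite big_pred1_eq flip0.
move=> /andP [Hx Hu] E.
rewrite /onePlusS /S_op !IH //.
rewrite [RHS](bigID (fun S : {set 'I_I} => x \in S)) /= [RHS]addrC; congr (_ + _).
  apply: eq_bigl => S; apply/idP/idP.
    move=> HS; have HxS : x \notin S.
      by apply/negP => /(subsetP HS); rewrite inE (negbTE Hx).
    rewrite HxS andbT; apply/subsetP => y /(subsetP HS); rewrite !inE => ->; by rewrite orbT.
  move=> /andP [HS HxS]; apply/subsetP => y Hy; have := subsetP HS y Hy; rewrite !inE.
  by case/orP => // /eqP Hyx; move: HxS; rewrite -Hyx Hy.
rewrite [RHS](reindex_onto (fun S => x |: S) (fun S => S :\ x)) /=; last first.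
  by move=> S /andP [_ HxS]; rewrite setD1K.
have HxS : forall S : {set 'I_I}, S \subset [set x0 in s] -> x \notin S.
  by move=> S HS; apply/negP => /(subsetP HS); rewrite inE (negbTE Hx).
apply: eq_big => S.
  rewrite setU11 andbT; apply/idP/idP.
    move=> HS; have HxS' := HxS _ HS; apply/andP; split.
      apply/subsetP => y; rewrite !inE => /orP [->//|Hy].
      by have := subsetP HS y Hy; rewrite inE => ->; rewrite orbT.
    apply/eqP/setP => y; rewrite !inE; case: (y =P x) => [->|] /=.
      by rewrite (negbTE HxS').
    by [].
  move=> /andP [H1 /eqP H2]; apply/subsetP => y Hy.
  have : y \in (x |: S) :\ x by rewrite H2.
  rewrite !inE => /andP [Hyx _].
  have := subsetP H1 y; rewrite !inE Hy orbT => /(_ isT) /orP [Hyx'|//].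
  by rewrite Hyx' in Hyx.
move=> HS; congr (F _); apply/funext => y; rewrite /flip /reflect_E !inE.
case: (y =P x) => [->|] /=; last by [].
by rewrite (negbTE (HxS _ HS)).
Qed.

Theorem theorem1 (R : realType) (n I Ne : nat)
  (src tgt : 'I_I -> 'I_n.+1) (att : 'I_Ne -> 'I_n.+1) (inc : 'I_Ne -> bool)
  (p : 'I_Ne -> R) (k : 'I_I -> 'rV[R]_3) (m : 'I_I -> R) (T : R) :
  (0 < n)%N ->
  (forall i, src i != tgt i) ->
  connected_after src tgt set0 ->
  0 < T ->
  let E := fun i => onshell (k i) (m i) in
  D_R src tgt att inc p E T =
  O_hat_apply src tgt T E (D_0 src tgt att inc p).
Proof.
move=> _ Hst _ _ E.
rewrite /D_R /O_hat_apply exchange_big /=; apply: eq_bigr => J _.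
rewrite /diagram_value.
under eq_bigr => pos _ do rewrite -big_distrl /=.
rewrite -big_distrl /= mulrC; congr (_ * _).
rewrite /prod_onePlusS foldr_onePlusS ?enum_uniq //.
have -> : [set x in enum J] = J by apply/setP => x; rewrite inE mem_enum.
rewrite /D_0 [RHS]exchange_big /=; apply: eq_bigr => pos _.
exact: sum_O.
Qed.
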